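(* Let \(G=(V,E)\) be a split graph with clique \(C\) and independent set \(I\) (so \(V=C\cup I\), disjointly), and let \(\sigma=(v_1,\dots,v_n)\) be an MNS ordering of \(V\). Then for every pair of vertices \(v_i\in I\) and \(v_j\in C\) with \(j>i\), the following hold, where \(l:=|\{v_1,\dots,v_{i-1}\}\cap C|\): (1) \(\{v_1,\dots,v_{i-1}\}\cap C\subseteq N(v_i)\); (2) \(\{v_{i+1},\dots,v_{i+\deg(v_i)-l}\}\subseteq N(v_i)\).
   Context: \(N(v)\) is the neighborhood of \(v\) and \(\deg(v)=|N(v)|\). An MNS (Maximum Neighborhood Search) ordering is a vertex ordering produced as follows for some start vertex \(s\) and some tie-breaking: all vertices get label \(\emptyset\), then \(s\) gets label \(\{n+1\}\); for \(i=1,\dots,n\), pick an unnumbered vertex whose label is maximal under set inclusion among the labels of unnumbered vertices, set it as \(v_i\), and add \(i\) to the label of each unnumbered neighbor of it. *)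

(* Defs.v *)
From mathcomp Require Import all_boot.
Set Implicit Arguments. Unset Strict Implicit. Unset Printing Implicit Defensive.

Definition simple_graph (T : finType) (e : rel T) : Prop :=
  symmetric e /\ irreflexive e.

Definition nbhd (T : finType) (e : rel T) (v : T) : {set T} := [set u | e v u].
Definition deg (T : finType) (e : rel T) (v : T) : nat := #|nbhd e v|.

Definition split_partition (T : finType) (e : rel T) (C I : {set T}) : Prop :=
  [/\ C :&: I = set0, C :|: I = [set: T],
      (forall x y, x \in C -> y \in C -> x != y -> e x y)
    & (forall x y, x \in I -> y \in I -> ~~ e x y)].

(* Orderings are #|T|-tuples; position k : 'I_#|T| (0-based) is the vertex
   v_(k+1) of the paper.  The label of vertex x just before v_(k+1) is chosen
   (i.e. after v_1..v_k got their numbers 1..k) is the set of numbers m such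
   that m = p+1 with p < k and v_(p+1) adjacent to x, plus n+1 if x = s. *)
Definition mns_label (T : finType) (e : rel T) (s : T)
    (sigma : #|T|.-tuple T) (k : nat) (x : T) : pred nat :=
  fun m => [exists p : 'I_#|T|, (p < k) && (m == p.+1) && e (tnth sigma p) x]
           || ((x == s) && (m == #|T|.+1)).

Definition label_sub (L1 L2 : pred nat) : Prop := forall m, L1 m -> L2 m.
Definition label_psub (L1 L2 : pred nat) : Prop :=
  label_sub L1 L2 /\ exists m, L2 m && ~~ L1 m.

Definition is_MNS (T : finType) (e : rel T) (sigma : #|T|.-tuple T) : Prop :=
  uniq sigma /\
  exists s : T, forall (k : 'I_#|T|) (u : T),
    u \notin take k sigma ->
    ~ label_psub (mns_label e s sigma k (tnth sigma k)) (mns_label e s sigma k u).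

(* Main.v *)
Require Import Defs.
From mathcomp Require Import all_boot.
From mathcomp Require Import zify.

Theorem lemma15 (T : finType) (e : rel T) (C I : {set T})
    (sigma : #|T|.-tuple T) :
  simple_graph e -> split_partition e C I -> is_MNS e sigma ->
  forall i j : 'I_#|T|, i < j -> tnth sigma i \in I -> tnth sigma j \in C ->
  let l := #|[set tnth sigma p | p : 'I_#|T| & p < i] :&: C| in
  (forall p : 'I_#|T|, p < i -> tnth sigma p \in C ->
     tnth sigma p \in nbhd e (tnth sigma i)) /\
  (forall p : 'I_#|T|, i < p <= i + (deg e (tnth sigma i) - l) ->
     tnth sigma p \in nbhd e (tnth sigma i)).
Proof.
move=> [esym eirr] [CI0 CIT Ccl Iind] [usig [s Hmns]] i j ij Ii Cj l.
have finj : injective (tnth sigma) := elimT (tuple_uniqP sigma) usig.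
have fsurj : forall x, exists q, tnth sigma q = x.
  move=> x; have := inj_card_onto finj (eq_leq (Logic.eq_sym (card_ord _))) x.
  by case/codomP => q ->; exists q.
have notin_take : forall q k : 'I_#|T|, (tnth sigma q \in take k sigma) = (q < k).
  move=> q k; rewrite in_take ?mem_tnth // (tnth_nth (tnth sigma q)) index_uniq //.
  by rewrite size_tuple.
have s0 : forall k : 'I_#|T|, 0 < k -> tnth sigma k != s.
  move=> k k0; apply/eqP => fks.
  pose k0' : 'I_#|T| := Ordinal (leq_ltn_trans (leq0n k) (ltn_ord k)).
  have := Hmns k0' s; rewrite take0 in_nil => /(_ isT); apply; split.
  - move=> m; rewrite /mns_label /= => /orP [/existsP [p]|]; first by [].
    rewrite -fks => /andP [/eqP /finj kk _].
    by move: k0; rewrite -kk.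
  - exists #|T|.+1; rewrite /mns_label /= !eqxx /= orbT /=.
    apply/negP => /orP [/existsP [p]|]; first by [].
    rewrite -fks => /andP [/eqP /finj kk _].
    by move: k0; rewrite -kk.
have K : forall k q : 'I_#|T|, 0 < k -> k <= q ->
    (forall p : 'I_#|T|, p < k -> e (tnth sigma p) (tnth sigma k) ->
        e (tnth sigma p) (tnth sigma q)) ->
    forall p : 'I_#|T|, p < k -> e (tnth sigma p) (tnth sigma q) ->
        e (tnth sigma p) (tnth sigma k).
  move=> k q k0 kq H p pk epq.
  have := Hmns k (tnth sigma q); rewrite notin_take ltnNge kq => /(_ isT) Hn.
  case: (boolP (e (tnth sigma p) (tnth sigma k))) => // nepk; exfalso; apply: Hn; split.
  - move=> m; rewrite /mns_label /=.
    move=> /orP [/existsP [p' /andP [/andP [p'k /eqP ->] ep']] | /andP [/eqP fks _]].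
      apply/orP; left; apply/existsP; exists p'; rewrite p'k eqxx /=; exact: H.
    by move: (s0 k k0); rewrite fks eqxx.
  - exists p.+1; rewrite /mns_label /=; apply/andP; split.
      apply/orP; left; apply/existsP; exists p; by rewrite pk eqxx epq.
    apply/negP => /orP [/existsP [p' /andP [/andP [_ /eqP pp] ep']] | /andP [_ /eqP]].
      have pp' : p' = p by apply: val_inj; case: pp.
      by move: ep'; rewrite pp' (negbTE nepk).
    by case=> H'; move: (ltn_ord p); rewrite H' ltnn.
have IC : forall x y, x \in I -> e x y -> y \in C.
  move=> x y xI exy; have : y \in C :|: I by rewrite CIT inE.
  rewrite inE => /orP [//|yI].
  by move: (Iind x y xI yI); rewrite exy.
have CnI : forall x, x \in C -> x \in I -> False.
  move=> x xC xI; have : x \in C :&: I by rewrite inE xC xI.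
  by rewrite CI0 inE.
have Hyp_i : forall q : 'I_#|T|, i <= q -> forall r : 'I_#|T|, r < i ->
    e (tnth sigma r) (tnth sigma i) -> e (tnth sigma r) (tnth sigma q) \/ 
    tnth sigma q \notin C.
  move=> q iq r ri eri.
  case: (boolP (tnth sigma q \in C)) => Cq; last by right.
  left.
  have Cr : tnth sigma r \in C by apply: (IC (tnth sigma i)); rewrite // esym.
  apply: Ccl => //; apply/eqP => /finj rq.
  by move: ri; rewrite rq ltnNge iq.
have Hyp_i' : forall q : 'I_#|T|, i <= q -> tnth sigma q \in C ->
    forall r : 'I_#|T|, r < i ->
    e (tnth sigma r) (tnth sigma i) -> e (tnth sigma r) (tnth sigma q).
  move=> q iq Cq r ri eri.
  by case: (Hyp_i q iq r ri eri) => //; rewrite Cq.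
have N : forall q p : 'I_#|T|, i <= q -> tnth sigma q \in C -> p < i ->
    tnth sigma p \in I -> ~~ e (tnth sigma p) (tnth sigma q).
  move=> q p iq Cq pi Ip; apply/negP => epq.
  have i0 : 0 < i by apply: leq_ltn_trans (leq0n p) pi.
  have := K i q i0 iq (Hyp_i' q iq Cq) p pi epq => /(IC _ _ Ip) Ci.
  exact: (CnI _ Ci Ii).
split.
  move=> p pi Cp; rewrite inE esym.
  have i0 : 0 < i by apply: leq_ltn_trans (leq0n p) pi.
  apply: (K i j i0 (ltnW ij) (Hyp_i' j (ltnW ij) Cj) p pi).
  apply: Ccl => //; apply/eqP => /finj pj.
  by move: (ltn_trans pi ij); rewrite pj ltnn.
have main : forall N (p : 'I_#|T|), p <= N -> i < p ->
    p <= i + (deg e (tnth sigma i) - l) -> e (tnth sigma i) (tnth sigma p).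
  elim=> [|M IH] p pN ip pb; first by lia.
  have IHp : forall r : 'I_#|T|, i < r < p -> e (tnth sigma i) (tnth sigma r).
    move=> r /andP [ir rp]; apply: IH => //; lia.
  have [q [pq eiq]] : exists q : 'I_#|T|, p <= q /\ e (tnth sigma i) (tnth sigma q).
    case: (boolP [exists q : 'I_#|T|, (p <= q) && e (tnth sigma i) (tnth sigma q)]).
      by move=> /existsP [q /andP [? ?]]; exists q.
    move=> Hno; exfalso.
    set S1 := [set r : 'I_#|T| | (r < i) && (tnth sigma r \in C)].
    set S2 := [set r : 'I_#|T| | i < r < p].
    have sub : nbhd e (tnth sigma i) \subset [set tnth sigma x | x in S1 :|: S2].
      apply/subsetP => y; rewrite inE => ey.
      have [r fr] := fsurj y; subst y.
      apply/imsetP; exists r => //; rewrite /S1 /S2 !inE.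
      have rp : r < p.
        apply: contraNT Hno; rewrite -leqNgt => pr.
        by apply/existsP; exists r; rewrite pr ey.
      case: (ltngtP r i) => [ri|ir|ri].
      - by rewrite /= (IC _ _ Ii ey).
      - by rewrite /= rp.
      - have ri' : r = i by apply: val_inj.
        by move: ey; rewrite ri' eirr.
    have c1 : #|S1| <= l.
      rewrite -(card_imset _ finj); apply: subset_leq_card.
      apply/subsetP => y /imsetP [r]; rewrite inE => /andP [ri rC] ->.
      rewrite inE rC andbT; apply/imsetP; exists r => //; by rewrite inE.
    have c2 : #|S2| <= p - i.+1.
      have hlt : forall k : 'I_(p - i.+1), k + i.+1 < #|T|.
        move=> k; have := ltn_ord k; have := ltn_ord p; lia.
      pose h := fun k => Ordinal (hlt k).
      have : S2 \subset [set h x | x in [set: 'I_(p - i.+1)]].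
        apply/subsetP => r; rewrite inE => /andP [ir rp].
        have kl : r - i.+1 < p - i.+1 by lia.
        apply/imsetP; exists (Ordinal kl); first by rewrite inE.
        apply: val_inj => /=; by rewrite subnK.
      move=> /subset_leq_card H; apply: (leq_trans H).
      by apply: (leq_trans (leq_imset_card _ _)); rewrite cardsT card_ord.
    have := subset_leq_card sub.
    have := leq_imset_card (tnth sigma) (S1 :|: S2).
    rewrite cardsU; move: pb; rewrite /deg; move: c1 c2 ip; clearbody l; clear IH; move: #|nbhd _ _| #|[set _ | _ in _]| #|S1| #|S1 :&: S2| #|S2| l (nat_of_ord i) (nat_of_ord p) => *; lia.
  apply: (K p q _ pq _ i ip eiq); first by lia.
  move=> r rp erp.
  have Cq : tnth sigma q \in C := IC _ _ Ii eiq.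
  case: (boolP (tnth sigma r \in C)) => rC.
    apply: Ccl => //; apply/eqP => /finj rq.
    by move: rp; rewrite rq ltnNge pq.
  have rI : tnth sigma r \in I.
    have : tnth sigma r \in C :|: I by rewrite CIT inE.
    by rewrite inE (negbTE rC).
  have Cp : tnth sigma p \in C := IC _ _ rI erp.
  case: (ltngtP r i) => [ri|ir|ri].
  - by have := N p r (ltnW ip) Cp ri rI; rewrite erp.
  - have := IHp r; rewrite ir rp => /(_ isT) /(IC _ _ Ii) Cr.
    by rewrite Cr in rC.
  - have ri' : r = i by apply: val_inj.
    by rewrite ri'.
move=> p /andP [ip pb]; rewrite inE; exact: (main p p (leqnn _) ip pb).
Qed.
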